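(* For every $p>0$ and every $\psi\in\mathcal H(V)$, $S_p(\psi)=\psi^{\top}L_p\psi$, where $L_p=D^{-1/2}(D_p-W_p)D^{-1/2}$ is built from $\psi$ as described in the context. In particular $S_2(\psi)=\psi^\top L\psi$ with $L=L_2=D^{-1/2}(D-W)D^{-1/2}$ independent of $\psi$.
   Context: Let $V$ be a finite nonempty set and $E_{un}$ a finite set of subsets of $V$ (hyperedges), each of cardinality at least $2$, with weights $w(e)>0$. Let $E$ be the set of all ordered tuples $e=[v_1,\dots,v_k]$ of distinct vertices whose underlying set belongs to $E_{un}$; write $w(e)$ for the weight of the underlying set, $\delta_e=k$ (also $\delta_e=|e|$ for $e\in E_{un}$), $e_{[1]}=v_1$. Degree $d(v)=\sum_{e\in E_{un}:\,v\in e}w(e)>0$, $D=\mathrm{diag}(d(v))$; $w(u,v)=\sum_{e\in E_{un}:\,u,v\in e}\frac{w(e)}{\delta_e-1}$ for $u\ne v$, $w(v,v)=0$, $W=(w(u,v))$. Gradient: $(\nabla\psi)([v_1,\dots,v_k])=\sqrt{\tfrac{w(e)}{k-1}}\sum_{i=1}^{k}\big(\tfrac{\psi(v_i)}{\sqrt{d(v_i)}}-\tfrac{\psi(v_1)}{\sqrt{d(v_1)}}\big)$. Node gradient norm: $\|\nabla\psi(v)\|=\big(\sum_{e\in E:\,e_{[1]}=v}\frac{(\nabla\psi)(e)^2}{\delta_e!}\big)^{1/2}$. $S_p(\psi)=\sum_{v\in V}\|\nabla\psi(v)\|^p$. Given $\psi$, let $g(v)=\|\nabla\psi(v)\|^{p-2}$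 if $\|\nabla\psi(v)\|>0$ and $g(v)=1$ otherwise; for $e\in E_{un}$, $\bar g_e=\frac1{\delta_e}\sum_{v'\in e}g(v')$; $w_p(u,v)=\sum_{e\in E_{un}:\,u,v\in e}\frac{w(e)}{\delta_e-1}(g(u)+g(v)-\bar g_e)$ for $u\neq v$, $w_p(v,v)=0$; $d_p(v)=d(v)g(v)-\sum_{e\in E_{un}:\,v\in e}\frac{w(e)}{\delta_e-1}(g(v)-\bar g_e)$; $W_p=(w_p(u,v))$, $D_p=\mathrm{diag}(d_p(v))$. *)

(* Defs.v *)
From Stdlib Require Import Reals.
From HB Require Import structures.
From mathcomp Require Import all_boot.

Set Implicit Arguments.
Unset Strict Implicit.
Unset Printing Implicit Defensive.

Lemma Rplus_assoc' : associative Rplus.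
Proof. by move=> x y z; rewrite Rplus_assoc. Qed.
Lemma Rplus_0_l' : left_id R0 Rplus.
Proof. exact: Rplus_0_l. Qed.
HB.instance Definition _ := Monoid.isComLaw.Build R R0 Rplus Rplus_assoc' Rplus_comm Rplus_0_l'.

Local Open Scope R_scope.

Section Hypergraph.
Variables (V : finType) (Eun : {set {set V}}) (w : {set V} -> R).

Definition hdeg (v : V) : R := \big[Rplus/R0]_(e in Eun | v \in e) w e.

Definition hW (u v : V) : R :=
  if u == v then 0
  else \big[Rplus/R0]_(e in Eun | (u \in e) && (v \in e)) (w e / (INR #|e| - 1)).

Definition hgrad (psi : V -> R) (we : R) (t : seq V) : R :=
  match t with
  | [::] => 0
  | v1 :: _ => sqrt (we / (INR (size t) - 1)) *
      \big[Rplus/R0]_(x <- t) (psi x / sqrt (hdeg x) - psi v1 / sqrt (hdeg v1))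
  end.

(* ||grad psi (v)||: sum over the ordered tuples e in E (ordered tuples of distinct
   vertices whose underlying set is a hyperedge of E_un) with first entry v.
   An element of E with underlying set e is a #|e|-tuple t with uniq t and [set x in t] = e. *)
Definition node_norm (psi : V -> R) (v : V) : R :=
  sqrt (\big[Rplus/R0]_(e in Eun)
          \big[Rplus/R0]_(t : (#|e|).-tuple V |
                 [&& uniq t, [set x in t] == e & ohead t == Some v])
            ((hgrad psi (w e) t) ^ 2 / INR (factorial #|e|))).

Definition rpow (x p : R) : R := if Rlt_dec 0 x then Rpower x p else 0.

Definition Sp (p : R) (psi : V -> R) : R :=
  \big[Rplus/R0]_(v : V) rpow (node_norm psi v) p.

Definition gp (p : R) (psi : V -> R) (v : V) : R :=
  if Rlt_dec 0 (node_norm psi v) then Rpower (node_norm psi v) (p - 2) else 1.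

Definition gbar (p : R) (psi : V -> R) (e : {set V}) : R :=
  / INR #|e| * \big[Rplus/R0]_(v' in e) gp p psi v'.

Definition hWp (p : R) (psi : V -> R) (u v : V) : R :=
  if u == v then 0
  else \big[Rplus/R0]_(e in Eun | (u \in e) && (v \in e))
         (w e / (INR #|e| - 1) * (gp p psi u + gp p psi v - gbar p psi e)).

Definition hdp (p : R) (psi : V -> R) (v : V) : R :=
  hdeg v * gp p psi v -
  \big[Rplus/R0]_(e in Eun | v \in e) (w e / (INR #|e| - 1) * (gp p psi v - gbar p psi e)).

Definition diagm (f : V -> R) (u v : V) : R := if u == v then f u else 0.

Definition normalized (A B : V -> V -> R) (u v : V) : R :=
  / sqrt (hdeg u) * (A u v - B u v) * / sqrt (hdeg v).

Definition Lp (p : R) (psi : V -> R) : V -> V -> R :=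
  normalized (diagm (hdp p psi)) (hWp p psi).
Definition Lap : V -> V -> R := normalized (diagm hdeg) hW.

Definition quadform (M : V -> V -> R) (psi : V -> R) : R :=
  \big[Rplus/R0]_(u : V) \big[Rplus/R0]_(v : V) (psi u * M u v * psi v).

End Hypergraph.

(* Main.v *)
Require Import Defs.
From Stdlib Require Import Reals Lra.
From HB Require Import structures.
From mathcomp Require Import all_boot.
Local Open Scope R_scope.

Lemma sumR_distrl c (I : Type) (r : seq I) (P : pred I) (F : I -> R) :
  c * \big[Rplus/R0]_(i <- r | P i) F i = \big[Rplus/R0]_(i <- r | P i) (c * F i).
Proof.
exact: (big_morph (fun x => c * x) (fun x y => Rmult_plus_distr_l c x y) (Rmult_0_r c)).
Qed.

Lemma sumR_distrr c (I : Type) (r : seq I) (P : pred I) (F : I -> R) :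
  \big[Rplus/R0]_(i <- r | P i) F i * c = \big[Rplus/R0]_(i <- r | P i) (F i * c).
Proof.
rewrite Rmult_comm sumR_distrl; apply: eq_bigr => i _; ring.
Qed.

Lemma sumR_add (I : Type) (r : seq I) (P : pred I) (F G : I -> R) :
  \big[Rplus/R0]_(i <- r | P i) (F i + G i) =
  \big[Rplus/R0]_(i <- r | P i) F i + \big[Rplus/R0]_(i <- r | P i) G i.
Proof. exact: big_split. Qed.

Lemma sumR_opp (I : Type) (r : seq I) (P : pred I) (F : I -> R) :
  - (\big[Rplus/R0]_(i <- r | P i) F i) = \big[Rplus/R0]_(i <- r | P i) (- F i).
Proof.
exact: (big_morph Ropp Ropp_plus_distr Ropp_0).
Qed.

Lemma sumR_sub (I : Type) (r : seq I) (P : pred I) (F G : I -> R) :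
  \big[Rplus/R0]_(i <- r | P i) (F i - G i) =
  \big[Rplus/R0]_(i <- r | P i) F i - \big[Rplus/R0]_(i <- r | P i) G i.
Proof. by rewrite /Rminus sumR_add sumR_opp. Qed.

Lemma sumR_ge0 (I : Type) (r : seq I) (P : pred I) (F : I -> R) :
  (forall i, P i -> 0 <= F i) -> 0 <= \big[Rplus/R0]_(i <- r | P i) F i.
Proof.
move=> H; apply: (big_ind (fun x => 0 <= x)) => //; [lra | move=> x y; lra].
Qed.

Lemma perm_enumE (V : finType) (e : {set V}) (s : seq V) :
  perm_eq s (enum e) = uniq s && ([set x in s] == e).
Proof.
apply/idP/idP.
  move=> H; rewrite (perm_uniq H) enum_uniq /=.
  by apply/eqP/setP => x; rewrite inE (perm_mem H) mem_enum.
case/andP=> Hu /eqP He; apply: uniq_perm => //; first exact: enum_uniq.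
by move=> x; rewrite mem_enum -He inE.
Qed.

Lemma count_tuples (V : finType) (e : {set V}) (v : V) :
  #|[pred t : (#|e|).-tuple V | [&& uniq t, [set x in t] == e & ohead t == Some v]]| =
  if v \in e then (#|e|.-1)`! else 0%N.
Proof.
set P := [pred t : (#|e|).-tuple V | _].
case: ifP => ve; last first.
  have H0 : forall s : seq V, ~~ [&& uniq s, [set x in s] == e & ohead s == Some v].
    case=> [|x s] /=; first by rewrite andbF.
    apply/negP => /and3P [_ /eqP He /eqP [xv]].
    by move: ve; rewrite -He inE xv mem_head.
  apply: eq_card0 => t; rewrite inE /=; apply/negbTE; exact: H0.
have Hperm : perm_eq (map val (enum P)) (map (cons v) (permutations (rem v (enum e)))).
  apply: uniq_perm.
  - by rewrite map_inj_uniq ?enum_uniq //; exact: val_inj.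
  - by rewrite map_inj_uniq ?permutations_uniq // => a b [].
  move=> s; apply/idP/idP.
    case/mapP => t; rewrite mem_enum /P /= => Pt ->.
    move: Pt; rewrite inE /=.
    have -> : [set x in t] = [set x in tval t] by apply/setP => x; rewrite !inE.
    case: (tval t) => [|x s'] /=; first by rewrite andbF.
    case/and3P => Hu Hs /eqP [xv]; subst x.
    apply: map_f; rewrite mem_permutations -(perm_cons v).
    have Hr : perm_eq (enum e) (v :: rem v (enum e)) by apply: perm_to_rem; rewrite mem_enum.
    by apply: (perm_trans _ Hr); rewrite perm_enumE /= Hu Hs.
  case/mapP => s' Hs' ->.
  have Hr : perm_eq (v :: rem v (enum e)) (enum e).
    by rewrite perm_sym; apply: perm_to_rem; rewrite mem_enum.
  have Hp : perm_eq (v :: s') (enum e).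
    by apply: (perm_trans _ Hr); rewrite perm_cons -mem_permutations.
  have sz : size (v :: s') == #|e| by rewrite (perm_size Hp) -cardE.
  apply/mapP; exists (Tuple sz) => //; rewrite mem_enum inE /= eqxx andbT.
  have -> : [set x in Tuple sz] = [set x in v :: s'] by apply/setP => x; rewrite !inE.
  by rewrite -[(v \notin s') && _]/(uniq (v :: s')) -perm_enumE.
rewrite [#|P|]cardE -(size_map val) (perm_size Hperm) size_map size_permutations.
  by rewrite size_rem ?mem_enum // -cardE.
by rewrite rem_uniq // enum_uniq.
Qed.

Lemma sumR_const (T : finType) (A : {pred T}) c :
  \big[Rplus/R0]_(i in A) c = INR #|A| * c.
Proof.
rewrite big_const; elim: #|A| => [|n IH]; first (simpl; ring).
rewrite S_INR /= IH; ring.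
Qed.
Lemma sumR_constP (T : finType) (Q : pred T) c :
  \big[Rplus/R0]_(i | Q i) c = INR #|Q| * c.
Proof. exact: sumR_const. Qed.

Lemma INR_ge2 (k : nat) : (2 <= k)%N -> 2 <= INR k.
Proof. move=> /leP H; have := le_INR 2 k H; simpl; lra. Qed.

Lemma INR_fact (k : nat) : (0 < k)%N -> INR (k`!) = INR k * INR ((k.-1)`!).
Proof. move=> k0; rewrite -{1}(prednK k0) factS prednK //. by rewrite -mult_INR. Qed.

Lemma hgrad_eq (V : finType) (Eun : {set {set V}}) (w : {set V} -> R) psi we
   (e : {set V}) (t : seq V) v :
  uniq t -> [set x in t] = e -> ohead t = Some v ->
  hgrad Eun w psi we t = sqrt (we / (INR #|e| - 1)) *
    (\big[Rplus/R0]_(x in e) (psi x / sqrt (hdeg Eun w x)) -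
     INR #|e| * (psi v / sqrt (hdeg Eun w v))).
Proof.
case: t => [|x s] // Hu He; case=> xv; subst x.
have Hsz : size (v :: s) = #|e|.
  by rewrite -He cardsE; apply/esym/card_uniqP.
rewrite /hgrad Hsz; congr (_ * _).
rewrite (big_uniq _ Hu) /=.
rewrite (eq_bigl (fun x => x \in e)); last by move=> x; rewrite -He inE.
by rewrite sumR_sub sumR_const.
Qed.

Definition phi (V : finType) (Eun : {set {set V}}) (w : {set V} -> R) (psi : V -> R) x :=
  psi x / sqrt (hdeg Eun w x).

Arguments phi {V}.
Definition sphi (V : finType) (Eun : {set {set V}}) (w : {set V} -> R) (psi : V -> R) (e : {set V}) :=
  \big[Rplus/R0]_(x in e) phi Eun w psi x.

Arguments sphi {V}.
Definition N2 (V : finType) (Eun : {set {set V}}) (w : {set V} -> R) (psi : V -> R) v :=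
  \big[Rplus/R0]_(e in Eun) (if v \in e then
      w e / (INR #|e| * (INR #|e| - 1)) * (sphi Eun w psi e - INR #|e| * phi Eun w psi v) ^ 2
    else 0).

Arguments N2 {V}.
Lemma node_normE (V : finType) (Eun : {set {set V}}) (w : {set V} -> R)
  (Hcard : forall e, e \in Eun -> (2 <= #|e|)%N)
  (Hw : forall e, e \in Eun -> 0 < w e) psi v :
  node_norm Eun w psi v = sqrt (N2 Eun w psi v).
Proof.
rewrite /node_norm /N2; congr sqrt; apply: eq_bigr => e He.
have k2 := Hcard e He; have w0 := Hw e He.
have k2R := INR_ge2 _ k2.
set C := w e / (INR #|e| - 1) * (sphi Eun w psi e - INR #|e| * phi Eun w psi v) ^ 2
         / INR (#|e|`!).
rewrite (eq_bigr (fun _ => C)); last first.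
  move=> t /and3P [Hu /eqP Hs /eqP Hh].
  rewrite (@hgrad_eq _ _ _ _ _ _ _ _ Hu Hs Hh) /C /sphi /phi.
  have Ha : 0 <= w e / (INR #|e| - 1).
    apply: Rlt_le; apply: Rdiv_lt_0_compat; lra.
  set a := w e / (INR #|e| - 1).
  rewrite /Rdiv; congr (_ * _).
  by rewrite -!Rsqr_pow2 Rsqr_mult Rsqr_sqrt.
rewrite sumR_constP count_tuples; case: ifP => _; last by rewrite /= Rmult_0_l.
rewrite /C [INR (#|e|`!)]INR_fact; last by apply: (leq_trans _ k2).
have : 0 < INR ((#|e|.-1)`!) by apply: lt_0_INR; apply/ltP; exact: fact_gt0.
move=> H; field; lra.
Qed.

Lemma sum3 (I : Type) (r : seq I) (P : pred I) (F1 F2 F3 : I -> R) a b c :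
  \big[Rplus/R0]_(i <- r | P i) (a * F1 i + b * F2 i + c * F3 i) =
  a * \big[Rplus/R0]_(i <- r | P i) F1 i + b * \big[Rplus/R0]_(i <- r | P i) F2 i +
  c * \big[Rplus/R0]_(i <- r | P i) F3 i.
Proof. by rewrite !sumR_add !sumR_distrl. Qed.

Lemma sum_if_eq (V : finType) (e : {set V}) u (K : R) : u \in e ->
  \big[Rplus/R0]_(v in e) (if u == v then K else 0) = K.
Proof.
move=> ue; rewrite (bigD1 u) //= eqxx big1 ?Rplus_0_r //.
by move=> v /andP [_]; rewrite eq_sym => /negbTE ->.
Qed.

Lemma edge_id (V : finType) (e : {set V}) (g f : V -> R) (we : R) :
  (2 <= #|e|)%N ->
  \big[Rplus/R0]_(v in e) (g v * (we / (INR #|e| * (INR #|e| - 1)) *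
      (\big[Rplus/R0]_(x in e) f x - INR #|e| * f v) ^ 2)) =
  \big[Rplus/R0]_(u in e) \big[Rplus/R0]_(v in e)
     (f u * (if u == v then we * g u - we / (INR #|e| - 1) * (g u - / INR #|e| * \big[Rplus/R0]_(x in e) g x)
             else - (we / (INR #|e| - 1) * (g u + g v - / INR #|e| * \big[Rplus/R0]_(x in e) g x))) * f v).
Proof.
move=> k2; have k2R := INR_ge2 _ k2.
set k := INR #|e|; set G := \big[Rplus/R0]_(x in e) g x; set S := \big[Rplus/R0]_(x in e) f x.
set A := \big[Rplus/R0]_(x in e) (g x * f x).
set B := \big[Rplus/R0]_(x in e) (g x * f x ^ 2).
set c := we / (k - 1); set gb := / k * G.
have L : \big[Rplus/R0]_(v in e) (g v * (we / (k * (k - 1)) * (S - k * f v) ^ 2)) =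
   (we / (k * (k - 1)) * S ^ 2) * G + (- 2 * k * S * (we / (k * (k - 1)))) * A +
   (k ^ 2 * (we / (k * (k - 1)))) * B.
  rewrite /G /A /B -sum3; apply: eq_bigr => v _; ring.
have R : forall u, u \in e -> \big[Rplus/R0]_(v in e)
     (f u * (if u == v then we * g u - c * (g u - gb) else - (c * (g u + g v - gb))) * f v) =
   (we + c) * (g u * f u ^ 2) + (- c * S) * (g u * f u) + (- c * A + c * gb * S) * f u.
  move=> u ue.
  transitivity (\big[Rplus/R0]_(v in e) ((- c * g u * f u) * f v + (- c * f u) * (g v * f v)
       + (c * gb * f u) * f v) +
     \big[Rplus/R0]_(v in e) (if u == v then f u * (we * g u + c * g u) * f u else 0)).
    rewrite -sumR_add; apply: eq_bigr => v _.
    case: eqP => [<-|_]; ring.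
  rewrite sum3 sum_if_eq //.
  rewrite -/S -/A; ring.
rewrite L (eq_bigr _ R) sum3 -/A -/B -/S /gb /c.
have k0 : k <> 0 by rewrite /k; lra.
have k1 : k - 1 <> 0 by rewrite /k; lra.
field; split; assumption.
Qed.

Definition gbG (V : finType) (g : V -> R) (e : {set V}) :=
  / INR #|e| * \big[Rplus/R0]_(v' in e) g v'.
Arguments gbG {V}.
Definition dG (V : finType) (Eun : {set {set V}}) (w : {set V} -> R) (g : V -> R) (v : V) :=
  hdeg Eun w v * g v -
  \big[Rplus/R0]_(e in Eun | v \in e) (w e / (INR #|e| - 1) * (g v - gbG g e)).
Arguments dG {V}.
Definition WG (V : finType) (Eun : {set {set V}}) (w : {set V} -> R) (g : V -> R) (u v : V) :=
  if u == v then 0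
  else \big[Rplus/R0]_(e in Eun | (u \in e) && (v \in e))
         (w e / (INR #|e| - 1) * (g u + g v - gbG g e)).
Arguments WG {V}.
Definition Mx (V : finType) (w : {set V} -> R) (g : V -> R) (e : {set V}) (u v : V) :=
  if (u \in e) && (v \in e) then
    (if u == v then w e * g u - w e / (INR #|e| - 1) * (g u - gbG g e)
     else - (w e / (INR #|e| - 1) * (g u + g v - gbG g e)))
  else 0.
Arguments Mx {V}.

Lemma entry_eq (V : finType) (Eun : {set {set V}}) (w : {set V} -> R) (g : V -> R) u v :
  diagm (dG Eun w g) u v - WG Eun w g u v = \big[Rplus/R0]_(e in Eun) Mx w g e u v.
Proof.
rewrite /diagm /WG /Mx; case: eqP => [<-|/eqP uv].
  rewrite Rminus_0_r /dG /hdeg sumR_distrr -sumR_sub big_mkcondr.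
  by apply: eq_bigr => e _; rewrite andbb.
rewrite Rminus_0_l sumR_opp big_mkcondr; apply: eq_bigr => e _.
by case: ifP.
Qed.

Lemma main_g (V : finType) (Eun : {set {set V}}) (w : {set V} -> R)
  (Hcard : forall e, e \in Eun -> (2 <= #|e|)%N) (g : V -> R) (psi : V -> R) :
  \big[Rplus/R0]_(v : V) (g v * N2 Eun w psi v) =
  quadform (normalized Eun w (diagm (dG Eun w g)) (WG Eun w g)) psi.
Proof.
rewrite /quadform.
transitivity (\big[Rplus/R0]_(u : V) \big[Rplus/R0]_(v : V)
   (phi Eun w psi u * \big[Rplus/R0]_(e in Eun) Mx w g e u v * phi Eun w psi v)); last first.
  apply: eq_bigr => u _; apply: eq_bigr => v _.
  rewrite /normalized -entry_eq /phi /Rdiv; ring.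
transitivity (\big[Rplus/R0]_(e in Eun) \big[Rplus/R0]_(u : V) \big[Rplus/R0]_(v : V)
   (phi Eun w psi u * Mx w g e u v * phi Eun w psi v)); last first.
  rewrite exchange_big; apply: eq_bigr => u _.
  rewrite exchange_big; apply: eq_bigr => v _.
  by rewrite sumR_distrl sumR_distrr.
transitivity (\big[Rplus/R0]_(e in Eun) \big[Rplus/R0]_(v : V)
   (g v * (if v \in e then
      w e / (INR #|e| * (INR #|e| - 1)) * (sphi Eun w psi e - INR #|e| * phi Eun w psi v) ^ 2
    else 0))).
  rewrite exchange_big; apply: eq_bigr => v _.
  by rewrite /N2 sumR_distrl.
apply: eq_bigr => e He.
transitivity (\big[Rplus/R0]_(v in e) (g v * (w e / (INR #|e| * (INR #|e| - 1)) *
      (\big[Rplus/R0]_(x in e) phi Eun w psi x - INR #|e| * phi Eun w psi v) ^ 2))).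
  rewrite [RHS]big_mkcond; apply: eq_bigr => v _.
  by case: (v \in e); rewrite ?Rmult_0_r.
rewrite (@edge_id _ _ _ _ _ (Hcard e He)).
rewrite [LHS]big_mkcond; apply: eq_bigr => u _.
case ue: (u \in e) => /=.
  rewrite big_mkcond; apply: eq_bigr => v _.
  rewrite /Mx ue /=; case: (v \in e) => //; rewrite /gbG; ring.
rewrite big1 // => v _; rewrite /Mx ue /=; ring.
Qed.


Lemma rpow_sqrt X p : 0 <= X ->
  rpow (sqrt X) p = (if Rlt_dec 0 (sqrt X) then Rpower (sqrt X) (p - 2) else 1) * X.
Proof.
move=> HX; rewrite /rpow; case: Rlt_dec => H /=.
  have -> : p = (p - 2) + INR 2 by simpl; ring.
  rewrite Rpower_plus Rpower_pow // /=.
  have -> : p - 2 + (1 + 1) - 2 = p - 2 by ring.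
  by rewrite Rmult_1_r sqrt_sqrt.
have H0 : sqrt X = 0 by have := sqrt_pos X; lra.
have := sqrt_eq_0 _ HX H0; lra.
Qed.

Lemma N2_ge0 (V : finType) (Eun : {set {set V}}) (w : {set V} -> R)
  (Hcard : forall e, e \in Eun -> (2 <= #|e|)%N)
  (Hw : forall e, e \in Eun -> 0 < w e) psi v : 0 <= N2 Eun w psi v.
Proof.
apply: sumR_ge0 => e He; case: (v \in e); last lra.
have k2R := INR_ge2 _ (Hcard e He); have := Hw e He => w0.
apply: Rmult_le_pos; last by rewrite -Rsqr_pow2; apply: Rle_0_sqr.
apply: Rlt_le; apply: Rdiv_lt_0_compat => //; apply: Rmult_lt_0_compat; lra.
Qed.

Lemma gbG1 (V : finType) (e : {set V}) : (2 <= #|e|)%N -> gbG (fun _ => 1) e = 1.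
Proof.
move=> k2; have k2R := INR_ge2 _ k2.
rewrite /gbG sumR_const; field; lra.
Qed.

Theorem proposition3 (V : finType) (Eun : {set {set V}}) (w : {set V} -> R)
  (HV : (0 < #|V|)%N)
  (Hcard : forall e, e \in Eun -> (2 <= #|e|)%N)
  (Hw : forall e, e \in Eun -> 0 < w e)
  (Hdeg : forall v, 0 < hdeg Eun w v)
  (p : R) (Hp : 0 < p) (psi : V -> R) :
  Sp Eun w p psi = quadform (Lp Eun w p psi) psi /\
  Sp Eun w 2 psi = quadform (Lap Eun w) psi.
Proof.
split.
  rewrite /Sp (eq_bigr (fun v => gp Eun w p psi v * N2 Eun w psi v)).
    exact: main_g.
  move=> v _; rewrite /gp !(node_normE _ _ _ Hcard Hw).
  exact: rpow_sqrt (N2_ge0 _ _ _ Hcard Hw psi v).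
rewrite /Sp (eq_bigr (fun v => (fun _ => 1) v * N2 Eun w psi v)).
  rewrite main_g //; rewrite /quadform; apply: eq_bigr => u _; apply: eq_bigr => v _.
  congr (_ * _ * _); rewrite /Lap /normalized; congr (_ * _ * _).
  congr (_ - _).
    rewrite /diagm; case: eqP => // _; rewrite /dG big1 ?Rmult_1_r ?Rminus_0_r //.
    move=> e /andP [He _]; rewrite gbG1 ?Hcard //; ring.
  rewrite /WG /hW; case: eqP => // _; apply: eq_bigr => e /andP [He _].
  rewrite gbG1 ?Hcard //; ring.
move=> v _; rewrite (node_normE _ _ _ Hcard Hw) rpow_sqrt; last exact: N2_ge0.
case: Rlt_dec => // H; congr (_ * _).
have -> : 2 - 2 = 0 by ring.
exact: Rpower_O.
Qed.
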